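(* Let $A\in\mathbb{R}^{n\times n}$ be nonsingular, $B\in\mathbb{R}^{n\times m}$, $N\geq1$ an integer, $\Omega=\{x\in\mathbb{R}^n: Hx\leq h\}$ bounded with $H\in\mathbb{R}^{n_h\times n}$, $X=\{y\in\mathbb{R}^n:Fy\leq f\}$ with $F\in\mathbb{R}^{n_f\times n}$, and $U=\{v\in\mathbb{R}^m: Gv\leq g\}$ bounded with $G\in\mathbb{R}^{n_g\times m}$; suppose $0\in\Omega$, $0\in X$, $0\in U$. Let $\bar G$, $\bar H$ be the matrices defined in the context, let $\hat g=(0,g,\dots,g,f,\dots,f)$ and $\tilde g=(h,0,\dots,0)$ (vectors of the same length as the number of rows of $\bar G$, partitioned like $\bar g$ in the context), let $\beta$ be the optimal value of the linear program $$\min_{\gamma\geq 0,\ T\geq 0,\ M}\ \gamma\quad\text{s.t.}\quad T\bar H=\bar G M,\quad Th\leq\gamma\hat g+\tilde g,\quad \begin{bmatrix}I&0&\cdots&0\end{bmatrix}=\begin{bmatrix}I&0&\cdots&0\end{bmatrix}M,$$ and let $\alpha=\beta^{-1}$. For $k\in\{1,\dots,N\}$ let $$\Omega_k^x=\Big\{x\in X:\ \exists\,u_1,\dots,u_k\in U \text{ with } A^kx+\sum_{i=0}^{k-1}A^{k-1-i}Bu_{k-i}\in\alpha\Omega,\ \ A^jx+\sum_{i=0}^{j-1}A^{j-1-i}Bu_{j-i}\in X\ \forall j\in\{1,\dots,k\}\Big\},$$ and $\bar\Omega^x=\mathrm{co}\big(\bigcup_{k=1}^N\Omega_k^x\big)$.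 Then $\bar\Omega^x$ equals the set of all $x\in\mathbb{R}^n$ for which there exist $z_1,\dots,z_N\in\mathbb{R}^n$, vectors $v_{k,i}\in\mathbb{R}^m$ ($k\in\{1,\dots,N\}$, $i\in\{1,\dots,k\}$) and $\lambda=(\lambda_1,\dots,\lambda_N)\in\mathbb{R}^N$ such that $x=\sum_{k=1}^N z_k$; $HA^kz_k+\sum_{i=0}^{k-1}HA^{k-1-i}Bv_{k,k-i}\leq\alpha\lambda_k h$ for all $k$; $FA^jz_k+\sum_{i=0}^{j-1}FA^{j-1-i}Bv_{k,j-i}\leq\lambda_k f$ for all $j\in\{1,\dots,k\}$ and all $k$; $Fz_k\leq\lambda_k f$ for all $k$; $Gv_{k,i}\leq\lambda_k g$ for all $i\in\{1,\dots,k\}$ and all $k$; $\lambda\geq0$ and $\sum_{k=1}^N\lambda_k=1$.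
   Context: Vector inequalities are componentwise; $T\geq0$ means entrywise nonnegative; $\mathrm{co}$ denotes convex hull. With $\bar n=n+Nm$, column blocks of widths $n,m,\dots,m$ (state block, then input blocks $i=1,\dots,N$): $\bar H=[H\ 0\ \cdots\ 0]\in\mathbb{R}^{n_h\times\bar n}$, and $\bar G$ has the block rows: $[HA^N\ \ HB\ \ HAB\ \cdots\ HA^{N-1}B]$; then for $i=1,\dots,N$ a block row with $G$ in input block $i$ and zeros elsewhere; then for $j=N,N-1,\dots,1$ a block row with $FA^j$ in the state block and $FA^{i-1-(N-j)}B$ in input block $i$ if $i\geq N-j+1$, $0$ otherwise; then the block row $[F\ 0\ \cdots\ 0]$. The vector $\bar g$ partitions accordingly as $(h,g,\dots,g,f,\dots,f)$ with $g$ repeated $N$ times and $f$ repeated $N+1$ times; $\hat g$ and $\tilde g$ use this partition. The matrix $\begin{bmatrix}I&0&\cdots&0\end{bmatrix}\in\mathbb{R}^{n\times\bar n}$ with $I$ the $n\times n$ identity; $M\in\mathbb{R}^{\bar n\times\bar n}$ and $T$ has as many rows as $\bar G$ and $n_h$ columns. It is implicitly assumed that $\beta>0$ so that $\alpha$ is defined. *)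

(* Defs.v *)
From HB Require Import structures.
From mathcomp Require Import all_boot all_order all_algebra.
From mathcomp Require Import reals.
Set Implicit Arguments. Unset Strict Implicit. Unset Printing Implicit Defensive.
Import Order.TTheory GRing.Theory Num.Theory.
Local Open Scope ring_scope.

Section Defs.
Variable R : realType.

Definition mxle (p q : nat) (U V : 'M[R]_(p, q)) : Prop :=
  forall i j, U i j <= V i j.

Definition polyh (p q : nat) (M : 'M[R]_(p, q)) (b : 'cV[R]_p) (x : 'cV[R]_q) : Prop :=
  mxle (M *m x) b.

Definition bounded_cV (q : nat) (S : 'cV[R]_q -> Prop) : Prop :=
  exists K : R, forall x, S x -> forall i j, `|x i j| <= K.

Definition conv_hull (q : nat) (S : 'cV[R]_q -> Prop) (x : 'cV[R]_q) : Prop :=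
  exists (p : nat) (mu : 'I_p -> R) (y : 'I_p -> 'cV[R]_q),
    (forall i, 0 <= mu i) /\ \sum_(i < p) mu i = 1 /\
    (forall i, S (y i)) /\ x = \sum_(i < p) mu i *: y i.

(* nat-indexed access to matrix entries (0 outside the range) *)
Definition mxn (p q : nat) (M : 'M[R]_(p, q)) (i j : nat) : R :=
  match (insub i : option 'I_p), (insub j : option 'I_q) with
  | Some i', Some j' => M i' j'
  | _, _ => 0
  end.

Variables (n m nh nf ng N : nat).
Variables (A : 'M[R]_n) (B : 'M[R]_(n, m)) (H : 'M[R]_(nh, n))
          (F : 'M[R]_(nf, n)) (G : 'M[R]_(ng, m)).
Variables (h : 'cV[R]_nh) (f : 'cV[R]_nf) (g : 'cV[R]_ng).

Definition nbar := (n + N * m)%N.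
Definition nrows := (nh + N * ng + N * nf + nf)%N.

(* Column c < n: state block; otherwise input block b+1 (0-based b = (c-n)/m)
   with offset (c-n) mod m. *)
Definition barG_entry (r c : nat) : R :=
  let b := ((c - n) %/ m)%N in
  let oc := ((c - n) %% m)%N in
  if (r < nh)%N then
    (if (c < n)%N then mxn (H *m A ^+ N) r c
     else mxn (H *m A ^+ b *m B) r oc)
  else if (r < nh + N * ng)%N then
    let r1 := (r - nh)%N in
    let blk := (r1 %/ ng)%N in
    let o := (r1 %% ng)%N in
    (if (c < n)%N then 0 else if b == blk then mxn G o oc else 0)
  else if (r < nh + N * ng + N * nf)%N then
    let r2 := (r - nh - N * ng)%N in
    let t := (r2 %/ nf)%N in          (* block row j = N - t *)
    let o := (r2 %% nf)%N in
    (if (c < n)%N then mxn (F *m A ^+ (N - t)) o c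
     else if (t <= b)%N then mxn (F *m A ^+ (b - t) *m B) o oc else 0)
  else
    let r3 := (r - nh - N * ng - N * nf)%N in
    (if (c < n)%N then mxn F r3 c else 0).

Definition barG : 'M[R]_(nrows, nbar) := \matrix_(r, c) barG_entry r c.

Definition barH : 'M[R]_(nh, nbar) :=
  \matrix_(r, c) (if (c < n)%N then mxn H r c else 0).

Definition hatg : 'cV[R]_nrows :=
  \col_r (if (r < nh)%N then 0
          else if (r < nh + N * ng)%N then mxn g ((r - nh) %% ng) 0
          else mxn f ((r - nh - N * ng) %% nf) 0).

Definition tildeg : 'cV[R]_nrows :=
  \col_r (if (r < nh)%N then mxn h r 0 else 0).

Definition Esel : 'M[R]_(n, nbar) := \matrix_(i, j) ((i : nat) == j)%:R.

Definition LP_feasible (gamma : R) (T : 'M[R]_(nrows, nh)) (M : 'M[R]_nbar) : Prop :=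
  0 <= gamma /\ mxle 0 T /\ T *m barH = barG *m M /\
  mxle (T *m h) (gamma *: hatg + tildeg) /\ Esel = Esel *m M.

Definition LP_optimal_value (beta : R) : Prop :=
  (exists T M, LP_feasible beta T M) /\
  (forall gamma T M, LP_feasible gamma T M -> beta <= gamma).

Definition traj (x : 'cV[R]_n) (u : nat -> 'cV[R]_m) (j : nat) : 'cV[R]_n :=
  A ^+ j *m x + \sum_(i < j) A ^+ (j - 1 - i) *m B *m u (j - i)%N.

Definition scaled_set (a : R) (S : 'cV[R]_n -> Prop) (z : 'cV[R]_n) : Prop :=
  exists y, S y /\ z = a *: y.

Definition Omega_kx (alpha : R) (k : nat) (x : 'cV[R]_n) : Prop :=
  polyh F f x /\
  exists u : nat -> 'cV[R]_m,
    (forall i, (1 <= i <= k)%N -> polyh G g (u i)) /\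
    scaled_set alpha (polyh H h) (traj x u k) /\
    (forall j, (1 <= j <= k)%N -> polyh F f (traj x u j)).

Definition Omega_union (alpha : R) (x : 'cV[R]_n) : Prop :=
  exists k, (1 <= k <= N)%N /\ Omega_kx alpha k x.

End Defs.

(* Main.v *)
Require Import Defs.
From HB Require Import structures.
From mathcomp Require Import all_boot all_order all_algebra.
From mathcomp Require Import reals.
From mathcomp Require Import boolp lra.
Import Order.TTheory GRing.Theory Num.Theory.
Local Open Scope ring_scope.
Set Implicit Arguments. Unset Strict Implicit.

Section H.
Variable R : realType.

Lemma mxle_sum (p q : nat) (I : finType) (P : pred I) (a b : I -> 'M[R]_(p,q)) :
  (forall i, P i -> mxle (a i) (b i)) ->
  mxle (\sum_(i | P i) a i) (\sum_(i | P i) b i).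
Proof. move=> hab r c; rewrite !summxE; apply: ler_sum => i Pi; exact: hab. Qed.

Lemma mxle_scale (p q : nat) (c : R) (a b : 'M[R]_(p,q)) :
  0 <= c -> mxle a b -> mxle (c *: a) (c *: b).
Proof. by move=> hc hab r s; rewrite !mxE ler_wpM2l. Qed.

Lemma mxle_inv (p q : nat) (c : R) (a b : 'M[R]_(p,q)) :
  0 < c -> mxle a (c *: b) -> mxle (c^-1 *: a) b.
Proof.
move=> hc hab; have hc' : 0 <= c^-1 by rewrite invr_ge0 ltW.
have := @mxle_scale p q c^-1 a (c *: b) hc' hab.
by rewrite scalerA mulVf ?scale1r // gt_eqF.
Qed.

Lemma rec0 (p q : nat) (M : 'M[R]_(p,q)) b :
  polyh M b 0 -> bounded_cV (polyh M b) -> forall y : 'cV[R]_q, mxle (M *m y) 0 -> y = 0.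
Proof.
move=> h0 [K hK] y hy.
have b0 : mxle 0 b by move: h0; rewrite /polyh mulmx0.
apply/matrixP => i j; rewrite mxE; apply/eqP; apply/negP => /negP yij.
have ny : 0 < `|y i j| by rewrite normr_gt0.
set t := (`|K| + 1) / `|y i j|.
have tpos : 0 < t by rewrite /t divr_gt0 // ltr_pwDr.
have : polyh M b (t *: y).
  move=> r c; rewrite -scalemxAr mxE; apply: le_trans (b0 r c).
  rewrite !mxE; apply: mulr_ge0_le0; first exact: ltW.
  by have := hy r c; rewrite !mxE.
move/hK => /(_ i j); rewrite mxE normrM (gtr0_norm tpos) /t divfK ?gt_eqF //.
have := ler_norm K; lra.
Qed.

Lemma unit_cancel (n : nat) (A : 'M[R]_n) (k : nat) (z : 'cV[R]_n) :
  A \in unitmx -> A ^+ k *m z = 0 -> z = 0.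
Proof.
move=> hA; elim: k z => [|k IH] z.
  by rewrite expr0 mul1mx.
rewrite exprSr -mulmxE -mulmxA => /IH hz.
by rewrite -(mulKmx hA z) hz mulmx0.
Qed.

Variables (n m : nat) (A : 'M[R]_n) (B : 'M[R]_(n, m)).

Lemma Ptraj (p : nat) (P : 'M[R]_(p, n)) x u j :
  P *m traj A B x u j =
  P *m A ^+ j *m x + \sum_(i < j) P *m A ^+ (j - 1 - i) *m B *m u (j - i)%N.
Proof.
rewrite /traj mulmxDr mulmx_sumr mulmxA; congr (_ + _).
by apply: eq_bigr => i _; rewrite !mulmxA.
Qed.

Lemma traj_scale (c : R) x u j :
  traj A B (c *: x) (fun i => c *: u i) j = c *: traj A B x u j.
Proof.
rewrite /traj scalerDr scalemxAr scaler_sumr; congr (_ + _).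
by apply: eq_bigr => i _; rewrite scalemxAr.
Qed.

Lemma traj0 j : traj A B 0 (fun _ => 0) j = 0.
Proof. by rewrite /traj mulmx0 add0r big1 // => i _; rewrite mulmx0. Qed.

Lemma traj_sum (I : finType) (P : pred I) (c : I -> R) x u j :
  traj A B (\sum_(i | P i) c i *: x i) (fun l => \sum_(i | P i) c i *: u i l) j
  = \sum_(i | P i) c i *: traj A B (x i) (u i) j.
Proof.
rewrite /traj mulmx_sumr.
under [in RHS]eq_bigr do rewrite scalerDr.
rewrite big_split /=; congr (_ + _).
  by apply: eq_bigr => i _; rewrite scalemxAr.
under eq_bigr do rewrite mulmx_sumr.
under [RHS]eq_bigr do rewrite scaler_sumr.
rewrite [RHS]exchange_big /=.
apply: eq_bigr => i _; apply: eq_bigr => l _; by rewrite scalemxAr.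
Qed.

End H.

Lemma partition_sum (V : nmodType) (p N : nat) (kf : 'I_p -> nat) (F : 'I_p -> V) :
  (forall i, (1 <= kf i <= N)%N) ->
  \sum_(1 <= k < N.+1) \sum_(i | kf i == k) F i = \sum_i F i.
Proof.
move=> hk; rewrite (exchange_big_dep xpredT) /=; [apply: eq_bigr => i _|by []].
rewrite big_mkcond (bigD1_seq (kf i)) ?iota_uniq ?mem_index_iota ?ltnS ?hk //=.
rewrite eqxx big1 ?addr0 // => k /negbTE; by rewrite eq_sym => ->.
Qed.

Lemma shift_sum (V : nmodType) (N : nat) (F : nat -> V) :
  \sum_(i < N) F i.+1 = \sum_(1 <= k < N.+1) F k.
Proof. by rewrite big_add1 /= big_mkord. Qed.

Theorem theorem3 (R : realType) (n m nh nf ng N : nat)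
  (A : 'M[R]_n) (B : 'M[R]_(n, m)) (H : 'M[R]_(nh, n)) (h : 'cV[R]_nh)
  (F : 'M[R]_(nf, n)) (f : 'cV[R]_nf) (G : 'M[R]_(ng, m)) (g : 'cV[R]_ng)
  (beta : R) :
  A \in unitmx ->
  (1 <= N)%N ->
  bounded_cV (polyh H h) ->
  bounded_cV (polyh G g) ->
  polyh H h 0 -> polyh F f 0 -> polyh G g 0 ->
  LP_optimal_value N A B H F G h f g beta ->
  0 < beta ->
  let alpha := beta^-1 in
  forall x : 'cV[R]_n,
    conv_hull (Omega_union N A B H F G h f g alpha) x <->
    exists (z : nat -> 'cV[R]_n) (v : nat -> nat -> 'cV[R]_m) (lam : nat -> R),
      x = \sum_(1 <= k < N.+1) z k /\
      (forall k, (1 <= k <= N)%N ->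
         mxle (H *m A ^+ k *m z k
               + \sum_(i < k) H *m A ^+ (k - 1 - i) *m B *m v k (k - i)%N)
              ((alpha * lam k) *: h)) /\
      (forall k j, (1 <= k <= N)%N -> (1 <= j <= k)%N ->
         mxle (F *m A ^+ j *m z k
               + \sum_(i < j) F *m A ^+ (j - 1 - i) *m B *m v k (j - i)%N)
              (lam k *: f)) /\
      (forall k, (1 <= k <= N)%N -> mxle (F *m z k) (lam k *: f)) /\
      (forall k i, (1 <= k <= N)%N -> (1 <= i <= k)%N ->
         mxle (G *m v k i) (lam k *: g)) /\
      (forall k, (1 <= k <= N)%N -> 0 <= lam k) /\
      \sum_(1 <= k < N.+1) lam k = 1.

Proof.
move=> hA hN bH bG h0 f0 g0 _ hbeta alpha x.
have alpha0 : 0 < alpha by rewrite /alpha invr_gt0.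
split.
- case=> p [mu [y [mu0 [mu1 [yS ->]]]]].
  have yF : forall i, polyh F f (y i) by move=> i; case: (yS i) => k [_ []].
  pose Pr := (fun (i : 'I_p) (t : nat * (nat -> 'cV[R]_m)) =>
     (1 <= t.1 <= N)%N /\
     (forall l, (1 <= l <= t.1)%N -> polyh G g (t.2 l)) /\
     scaled_set alpha (polyh H h) (traj A B (y i) t.2 t.1) /\
     (forall j, (1 <= j <= t.1)%N -> polyh F f (traj A B (y i) t.2 j))).
  have hex : forall i, exists t, Pr i t.
    move=> i; case: (yS i) => k [hk [_ [u hu]]]; by exists (k, u).
  have [ku hku] := boolp.choice hex.
  set kf := fun i => (ku i).1.
  set uf := fun i => (ku i).2.
  have kfN : forall i, (1 <= kf i <= N)%N by move=> i; case: (hku i).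
  exists (fun k => \sum_(i | kf i == k) mu i *: y i),
         (fun k l => \sum_(i | kf i == k) mu i *: uf i l),
         (fun k => \sum_(i | kf i == k) mu i).
  split; first by rewrite partition_sum.
  split.
    move=> k hk /=.
    rewrite -(@Ptraj _ _ _ A B _ H _ (fun l => \sum_(i | kf i == k) mu i *: uf i l) k).
    rewrite traj_sum mulmx_sumr mulr_sumr scaler_suml.
    apply: mxle_sum => i /eqP ki.
    rewrite -scalemxAr [alpha * _]mulrC -scalerA; apply: mxle_scale; first exact: mu0.
    case: (hku i) => _ [_ [[w [hw hw']] _]].
    move: hw'; rewrite -/(uf i) -/(kf i) ki => ->.
    rewrite -scalemxAr; apply: mxle_scale => //; exact: ltW.
  split.
    move=> k j hk hj /=.
    rewrite -(@Ptraj _ _ _ A B _ F _ (fun l => \sum_(i | kf i == k) mu i *: uf i l) j).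
    rewrite traj_sum mulmx_sumr scaler_suml.
    apply: mxle_sum => i /eqP ki.
    rewrite -scalemxAr; apply: mxle_scale; first exact: mu0.
    case: (hku i) => _ [_ [_ hF]].
    apply: hF; by rewrite -/(kf i) ki.
  split.
    move=> k hk /=; rewrite mulmx_sumr scaler_suml.
    apply: mxle_sum => i _; rewrite -scalemxAr; apply: mxle_scale; [exact: mu0|exact: yF].
  split.
    move=> k l hk hl /=; rewrite mulmx_sumr scaler_suml.
    apply: mxle_sum => i /eqP ki; rewrite -scalemxAr; apply: mxle_scale; first exact: mu0.
    case: (hku i) => _ [hG _]; apply: hG; by rewrite -/(kf i) ki.
  split.
    move=> k _; apply: sumr_ge0 => i _; exact: mu0.
  by rewrite partition_sum.
- case=> z [v [lam [-> [cH [cF [cF0 [cG [l0 l1]]]]]]]].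
  have z0 : forall k, (1 <= k <= N)%N -> lam k = 0 -> z k = 0.
    move=> k hk lk.
    have v0 : forall l, (1 <= l <= k)%N -> v k l = 0.
      move=> l hl; apply: (rec0 g0 bG); have := cG k l hk hl.
      by rewrite lk scale0r.
    have := cH k hk; rewrite big1; last first.
      move=> i _; rewrite v0 ?mulmx0 //.
      by apply/andP; split; [rewrite subn_gt0 | rewrite leq_subr].
    rewrite addr0 lk mulr0 scale0r -mulmxA => /(rec0 h0 bH).
    exact: unit_cancel.
  exists N, (fun i : 'I_N => lam i.+1),
    (fun i : 'I_N => if lam i.+1 == 0 then 0 else (lam i.+1)^-1 *: z i.+1).
  split; first by move=> i; apply: l0; rewrite ltn_ord.
  split; first by rewrite (@shift_sum _ N (fun k => lam k)).
  split; last first.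
    rewrite -(@shift_sum _ N z); apply: eq_bigr => i _.
    case: eqP => [li|ne]; first by rewrite li scale0r (z0 i.+1) ?ltn_ord.
    by rewrite scalerA mulfV ?scale1r //; apply/eqP.
  move=> i; exists i.+1; split; first by rewrite ltn_ord.
  have hk : (1 <= i.+1 <= N)%N by rewrite ltn_ord.
  case: eqP => [_|ne].
    split; first exact: f0.
    exists (fun _ => 0); split; first by move=> *; exact: g0.
    rewrite traj0; split; first by exists 0; split; [exact: h0|rewrite scaler0].
    by move=> *; rewrite traj0.
  have lpos : 0 < lam i.+1 by rewrite lt_def l0 // andbT; apply/eqP.
  split; first by rewrite /polyh -scalemxAr; apply: mxle_inv => //; exact: cF0.
  exists (fun l => (lam i.+1)^-1 *: v i.+1 l).
  split; first by move=> l hl; rewrite /polyh -scalemxAr; apply: mxle_inv => //; exact: cG.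
  rewrite !traj_scale; split.
    exists (alpha^-1 *: ((lam i.+1)^-1 *: traj A B (z i.+1) (v i.+1) i.+1)); split.
      rewrite /polyh -!scalemxAr scalerA -invfM; apply: mxle_inv; first exact: mulr_gt0.
      by rewrite Ptraj; apply: cH.
    by rewrite !scalerA mulrA mulfV ?mul1r // gt_eqF.
  move=> j hj; rewrite traj_scale /polyh -scalemxAr; apply: mxle_inv => //.
  by rewrite Ptraj; apply: cF.
Qed.
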